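(* Let $(X,\Sigma)$ be a measurable space, $p$ a transition function on it with associated operator $A$ on $ba(X,\Sigma)$, and let $K=\{\mu_1,\dots,\mu_m\}$ be a finitely additive cycle of measures of $A$ of period $m$ whose cyclic measures are pairwise disjoint. For each $i$ let $\mu_i=\mu_i^{ca}+\mu_i^{pfa}$ be the decomposition of $\mu_i$ into a countably additive component $\mu_i^{ca}$ and a purely finitely additive component $\mu_i^{pfa}$. Then these components are also cyclic: $K^{ca}=\{\mu_1^{ca},\dots,\mu_m^{ca}\}$ and $K^{pfa}=\{\mu_1^{pfa},\dots,\mu_m^{pfa}\}$ form cycles (i.e. $A\mu_i^{ca}=\mu_{i+1}^{ca}$, $A\mu_i^{pfa}=\mu_{i+1}^{pfa}$ for $1\le i\le m-1$, $A\mu_m^{ca}=\mu_1^{ca}$, $A\mu_m^{pfa}=\mu_1^{pfa}$); $K$ is the coordinatewise sum $K=K^{ca}+K^{pfa}$; the mean measure of $K$ is uniquely representable as the sum of its countably additive and purely finitely additive components, and these coincide with the mean measures of $K^{ca}$ and $K^{pfa}$ respectively. Moreover the measures of $K^{ca}$ are pairwise disjoint, the measures of $K^{pfa}$ are pairwise disjoint, and every measure from $K^{ca}$ is disjoint with every measure from $K^{pfa}$.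
   Context: $X$ is an arbitrary infinite set and $\Sigma$ a $\sigma$-algebra of subsets of $X$ containing all one-point sets. $ba(X,\Sigma)$ denotes the space of bounded finitely additive real-valued measures on $\Sigma$, ordered setwise. A nonnegative finitely additive measure is purely finitely additive if every countably additive measure $\lambda$ with $0\le\lambda\le\mu$ is zero; every finitely additive measure decomposes uniquely as a sum of a countably additive and a purely finitely additive measure. For positive $\mu,\nu\in ba(X,\Sigma)$, $(\mu\wedge\nu)(E)=\inf\{\mu(C)+\nu(E\setminus C): C\subset E, C\in\Sigma\}$, and $\mu,\nu$ are called disjoint if $\mu\wedge\nu=0$. A transition function is a map $p(x,E)$ with $0\le p(x,E)\le1$, $p(x,X)=1$, $p(\cdot,E)$ bounded $\Sigma$-measurable for every $E$, and $p(x,\cdot)$ countably additive for every $x$. The Markov operator is $A\mu(E)=\int_X p(x,E)\,\mu(dx)$. A cycle of measures of $A$ is a finite numbered set $\{\mu_1,\dots,\mu_m\}$ of pairwise different positive finitely additive measures with $A\mu_i=\mu_{i+1}$ ($1\le i\le m-1$), $A\mu_m=\mu_1$; its mean measure is $\frac1m\sum_k\mu_k$. The sum of two cycles of the same period is obtained by coordinatewise addition. *)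

(* Defs.v *)
(* Measurable space (X, Sigma) given as a raw
   family of sets Sigma : set (set X); measures are functions set X -> R
   and are only ever compared on Sigma. *)
From mathcomp Require Import all_boot all_order all_algebra.
From mathcomp Require Import all_classical all_reals all_analysis.
Set Implicit Arguments. Unset Strict Implicit. Unset Printing Implicit Defensive.
Import Order.TTheory GRing.Theory Num.Theory.
Import numFieldNormedType.Exports.
Local Open Scope classical_set_scope.
Local Open Scope ring_scope.

Section Defs.
Variables (R : realType) (X : Type) (Sigma : set (set X)).

Definition is_sigma_algebra : Prop :=
  [/\ Sigma setT,
      (forall E, Sigma E -> Sigma (~` E)) &
      (forall F : nat -> set X, (forall n, Sigma (F n)) ->
          Sigma (\bigcup_n F n))].

Definition meq (mu nu : set X -> R) : Prop := forall E, Sigma E -> mu E = nu E.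

Definition ba_measure (mu : set X -> R) : Prop :=
  [/\ mu set0 = 0,
      (forall E F, Sigma E -> Sigma F -> E `&` F = set0 ->
          mu (E `|` F) = mu E + mu F) &
      (exists M : R, forall E, Sigma E -> `|mu E| <= M)].

Definition nonneg_measure (mu : set X -> R) : Prop :=
  forall E, Sigma E -> 0 <= mu E.

Definition countably_additive (mu : set X -> R) : Prop :=
  forall F : nat -> set X, (forall n, Sigma (F n)) -> trivIset setT F ->
    ((fun n : nat => \sum_(0 <= i < n) mu (F i)) : nat -> R) @ \oo --> (mu (\bigcup_n F n) : R).

Definition purely_fa (mu : set X -> R) : Prop :=
  [/\ ba_measure mu, nonneg_measure mu &
      forall lam, ba_measure lam -> countably_additive lam ->
        (forall E, Sigma E -> 0 <= lam E <= mu E) -> meq lam (fun _ => 0)].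

Definition meas_meet (mu nu : set X -> R) (E : set X) : R :=
  inf [set mu C + nu (E `\` C) | C in [set C | Sigma C /\ C `<=` E]].

Definition meas_disjoint (mu nu : set X -> R) : Prop :=
  meq (meas_meet mu nu) (fun _ => 0).

Definition finite_partition (n : nat) (F : nat -> set X) : Prop :=
  [/\ forall i, (i < n)%N -> Sigma (F i),
      trivIset `I_n F &
      \bigcup_(i in `I_n) F i = setT].

(* integral of a bounded Sigma-measurable function f w.r.t. a nonnegative
   finitely additive measure mu: supremum of the lower (Darboux) sums over
   finite measurable partitions *)
Definition fa_integral (mu : set X -> R) (f : X -> R) : R :=
  sup [set s | exists n F, finite_partition n F /\
         s = \sum_(i < n) inf (f @` F i) * mu (F i)].

Definition Sigma_measurable_fun (f : X -> R) : Prop :=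
  forall a : R, Sigma [set x | f x <= a].

Definition transition_function (p : X -> set X -> R) : Prop :=
  [/\ (forall x E, Sigma E -> 0 <= p x E <= 1),
      (forall x, p x setT = 1),
      (forall E, Sigma E -> Sigma_measurable_fun (fun x => p x E)) &
      (forall x, ba_measure (p x) /\ countably_additive (p x))].

Definition markov_op (p : X -> set X -> R) (mu : set X -> R) : set X -> R :=
  fun E => fa_integral mu (fun x => p x E).

(* cycle of measures of A of period m (indices 0..m-1) *)
Definition is_cycle (p : X -> set X -> R) (m : nat) (mu : nat -> set X -> R) : Prop :=
  [/\ (0 < m)%N,
      (forall i, (i < m)%N -> ba_measure (mu i) /\ nonneg_measure (mu i)),
      (forall i j, (i < m)%N -> (j < m)%N -> i <> j -> ~ meq (mu i) (mu j)) &
      (forall i, (i < m)%N -> meq (markov_op p (mu i)) (mu (i.+1 %% m)%N))].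

Definition mean_measure (m : nat) (mu : nat -> set X -> R) : set X -> R :=
  fun E => m%:R^-1 * \sum_(k < m) mu k E.

End Defs.

(* Main.v *)
Require Import Defs.
From mathcomp Require Import all_boot all_order all_algebra.
From mathcomp Require Import all_classical all_reals all_analysis.
From mathcomp Require Import zify ring lra.
Import Order.TTheory GRing.Theory Num.Theory.
Import numFieldNormedType.Exports.
Local Open Scope classical_set_scope.
Local Open Scope ring_scope.
Set Implicit Arguments. Unset Strict Implicit. Unset Printing Implicit Defensive.

Section Basics.
Variables (R : realType) (X : Type) (Sigma : set (set X)).
Hypothesis HS : is_sigma_algebra Sigma.

Lemma S_T : Sigma setT. Proof. by case: HS. Qed.
Lemma S_C E : Sigma E -> Sigma (~` E). Proof. by case: HS => _ H _; apply: H. Qed.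
Lemma S_0 : Sigma set0. Proof. by rewrite -setCT; exact: (S_C S_T). Qed.
Lemma S_bigcup (F : nat -> set X) : (forall n, Sigma (F n)) -> Sigma (\bigcup_n F n).
Proof. by case: HS => _ _ H; apply: H. Qed.
Lemma S_U A B : Sigma A -> Sigma B -> Sigma (A `|` B).
Proof.
move=> HA HB.
have -> : A `|` B = \bigcup_n (if n == 0%N then A else B).
  apply/seteqP; split => x.
    by case=> Hx; [exists 0%N|exists 1%N].
  by case=> n _; case: (n == 0%N) => ?; [left|right].
by apply: S_bigcup => n; case: (n == 0%N).
Qed.
Lemma S_I A B : Sigma A -> Sigma B -> Sigma (A `&` B).
Proof.
move=> HA HB; rewrite -[A]setCK -[B]setCK -setCU.
by apply: S_C; apply: S_U; apply: S_C.
Qed.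
Lemma S_D A B : Sigma A -> Sigma B -> Sigma (A `\` B).
Proof. by move=> HA HB; rewrite setDE; apply: S_I => //; apply: S_C. Qed.

Lemma bigU_mem (E : nat -> set X) N x :
  (\big[setU/set0]_(0 <= i < N) E i) x <-> exists2 i, (i < N)%N & E i x.
Proof.
elim: N => [|N IH]; first by rewrite big_geq //; split => // -[].
rewrite big_nat_recr //=; split.
  case=> [/IH [i Hi Hx]|Hx]; last by exists N.
  by exists i => //; apply: ltnW.
case=> i; rewrite ltnS leq_eqVlt => /orP [/eqP ->|Hi] Hx; first by right.
by left; apply/IH; exists i.
Qed.

Lemma S_bigU (E : nat -> set X) N :
  (forall i, (i < N)%N -> Sigma (E i)) -> Sigma (\big[setU/set0]_(0 <= i < N) E i).
Proof.
elim: N => [|N IH] H; first by rewrite big_geq //; exact: S_0.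
rewrite big_nat_recr //=; apply: S_U; last by apply: H.
by apply: IH => i Hi; apply: H; apply: ltnW.
Qed.

Lemma disj_triv (I : Type) (D : set I) (F : I -> set X) i j :
  trivIset D F -> D i -> D j -> i <> j -> F i `&` F j = set0.
Proof.
move=> Ht Di Dj Hn; apply/seteqP; split => // x [Hi Hj].
by apply: Hn; apply: Ht => //; exists x.
Qed.

Section Meas.
Variable mu : set X -> R.
Hypothesis Hmu : ba_measure Sigma mu.

Lemma m0 : mu set0 = 0. Proof. by case: Hmu. Qed.
Lemma mU A B : Sigma A -> Sigma B -> A `&` B = set0 -> mu (A `|` B) = mu A + mu B.
Proof. by case: Hmu => _ H _; apply: H. Qed.
Lemma mSplit A B : Sigma A -> Sigma B -> mu A = mu (A `&` B) + mu (A `\` B).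
Proof.
move=> HA HB; rewrite -mU; first by rewrite setUIDK.
- exact: S_I. - exact: S_D.
apply/seteqP; split => // x [[_ Hb] [_ Hnb]]; exact: Hnb.
Qed.
Lemma mDsub A B : Sigma A -> Sigma B -> B `<=` A -> mu (A `\` B) = mu A - mu B.
Proof.
move=> HA HB HBA; rewrite (mSplit HA HB).
have -> : A `&` B = B by apply/seteqP; split => [x []//|x Hx]; split => //; exact: HBA.
by rewrite addrC addKr.
Qed.
Lemma mbound : exists M, forall E, Sigma E -> `|mu E| <= M.
Proof. by case: Hmu. Qed.

Lemma FA_big (E : nat -> set X) N :
  (forall i, (i < N)%N -> Sigma (E i)) ->
  (forall i j, (i < N)%N -> (j < N)%N -> i <> j -> E i `&` E j = set0) ->
  mu (\big[setU/set0]_(0 <= i < N) E i) = \sum_(0 <= i < N) mu (E i).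
Proof.
elim: N => [|N IH] HE Hd; first by rewrite !big_geq // m0.
rewrite !big_nat_recr //= mU.
- rewrite IH // => [i Hi|i j Hi Hj]; first by apply: HE; apply: ltnW.
  by apply: Hd; apply: ltnW.
- by apply: S_bigU => i Hi; apply: HE; apply: ltnW.
- exact: HE.
apply/seteqP; split => // x [/bigU_mem [i Hi Hx] HN].
have : E i `&` E N = set0 by apply: Hd => //; [apply: ltnW| move=> e; rewrite e ltnn in Hi].
by move/seteqP => [/(_ x (conj Hx HN))].
Qed.

Hypothesis Hnn : nonneg_measure Sigma mu.
Lemma mmono A B : Sigma A -> Sigma B -> B `<=` A -> mu B <= mu A.
Proof.
move=> HA HB HBA; rewrite -subr_ge0 -mDsub //; apply: Hnn; exact: S_D.
Qed.
End Meas.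
End Basics.

Definition Lsum (R : realType) (X : Type) (mu : set X -> R) (f : X -> R) n (F : nat -> set X) :=
  \sum_(i < n) inf (f @` F i) * mu (F i).
Definition finep (R : realType) (X : Type) (f : X -> R) (d : R) n (F : nat -> set X) :=
  forall i, (i < n)%N -> forall x y, F i x -> F i y -> f x <= f y + d.

Section Integral.
Variables (R : realType) (X : Type) (Sigma : set (set X)).
Hypothesis HS : is_sigma_algebra Sigma.

Lemma inf_le_pt (f : X -> R) (A : set X) x : (forall x, 0 <= f x) -> A x -> inf (f @` A) <= f x.
Proof.
move=> H0 Ax; apply: ge_inf; last by exists x.
by exists 0 => _ [y _ <-].
Qed.
Lemma le_inf_pt (f : X -> R) (A : set X) x c : A x -> (forall y, A y -> c <= f y) -> c <= inf (f @` A).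
Proof.
move=> Ax H; apply: lb_le_inf; first by exists (f x), x.
by move=> _ [y Hy <-]; apply: H.
Qed.

Lemma part_S n F i : finite_partition Sigma n F -> (i < n)%N -> Sigma (F i).
Proof. by case=> H _ _; apply: H. Qed.

Lemma part_cover n F x : finite_partition Sigma n F -> exists2 i, (i < n)%N & F i x.
Proof.
case=> _ _ /seteqP [_ H]; have [i Hi Hx] := H x I; by exists i.
Qed.

Lemma part_disj n F i j : finite_partition Sigma n F -> (i < n)%N -> (j < n)%N -> i <> j ->
  F i `&` F j = set0.
Proof. by case=> _ Ht _ Hi Hj; apply: (disj_triv Ht). Qed.

Lemma T1_part : finite_partition Sigma 1 (fun _ => setT).
Proof.
split => //; first by move=> *; exact: (S_T HS).
  by move=> i j; rewrite /= !ltnS !leqn0 => /eqP -> /eqP ->.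
by apply/seteqP; split => // x _; exists 0%N.
Qed.

Variable mu : set X -> R.
Hypothesis Hmu : ba_measure Sigma mu.
Hypothesis Hnn : nonneg_measure Sigma mu.

Lemma FA_part n F S : finite_partition Sigma n F -> Sigma S ->
  \sum_(i < n) mu (S `&` F i) = mu S.
Proof.
move=> HP HSS; rewrite -(big_mkord xpredT (fun i => mu (S `&` F i))).
rewrite -(FA_big HS Hmu) //.
- congr mu; apply/seteqP; split => x.
    by move/bigU_mem => [i _ []].
  move=> Sx; apply/bigU_mem; have [i Hi Fx] := part_cover x HP; by exists i.
- by move=> i Hi; apply: (S_I HS) => //; apply: (part_S HP).
move=> i j Hi Hj Hn; apply/seteqP; split => // x [[_ Fi] [_ Fj]].
by move: (part_disj HP Hi Hj Hn) => /seteqP [/(_ x (conj Fi Fj))].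
Qed.

Lemma sum_part n F : finite_partition Sigma n F -> \sum_(i < n) mu (F i) = mu setT.
Proof.
move=> HP; rewrite -(FA_part HP (S_T HS)); apply: eq_bigr => i _; by rewrite setTI.
Qed.

Lemma Lsum_le_fine (f : X -> R) d n F k G : (forall x, 0 <= f x) ->
  finite_partition Sigma n F -> finep f d n F -> finite_partition Sigma k G ->
  Lsum mu f k G <= Lsum mu f n F + d * mu setT.
Proof.
move=> Hf HP Hfine HG; rewrite /Lsum.
have -> : \sum_(j < k) inf (f @` G j) * mu (G j) =
    \sum_(j < k) \sum_(i < n) inf (f @` G j) * mu (G j `&` F i).
  by apply: eq_bigr => j _; rewrite -mulr_sumr (FA_part HP) //; apply: (part_S HG).
have -> : \sum_(i < n) inf (f @` F i) * mu (F i) + d * mu setT =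
    \sum_(i < n) \sum_(j < k) (inf (f @` F i) + d) * mu (G j `&` F i).
  rewrite -(sum_part HP) mulr_sumr -big_split /=; apply: eq_bigr => i _.
  rewrite -mulrDl -mulr_sumr; congr (_ * _).
  rewrite -(FA_part HG (part_S HP (ltn_ord i))); apply: eq_bigr => j _; by rewrite setIC.
rewrite exchange_big /=; apply: ler_sum => i _; apply: ler_sum => j _.
case: (pselect (G j `&` F i !=set0)) => [[x [Gx Fx]]|H0].
  apply: ler_wpM2r; first by apply: Hnn; apply: (S_I HS); [apply: (part_S HG)|apply: (part_S HP)].
  apply: (le_trans (inf_le_pt Hf Gx)); rewrite -lerBlDr.
  apply: (le_inf_pt Fx) => y Fy; rewrite lerBlDr; exact: (Hfine _ (ltn_ord i)).
have -> : G j `&` F i = set0 by apply/seteqP; split => // y Hy; apply: H0; exists y.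
by rewrite (m0 Hmu) !mulr0.
Qed.

Lemma Lsum_T1 (f : X -> R) : Lsum mu f 1 (fun _ => setT) = inf (f @` setT) * mu setT.
Proof. by rewrite /Lsum big_ord1. Qed.

Lemma fine_T1 (f : X -> R) B : (forall x, 0 <= f x <= B) -> finep f B 1 (fun _ => setT).
Proof.
move=> Hf i _ x y _ _; have /andP [_ H1] := Hf x; have /andP [H2 _] := Hf y.
by apply: le_trans H1 _; rewrite lerDr.
Qed.

Lemma I_ge_L (f : X -> R) B n F : (forall x, 0 <= f x <= B) -> finite_partition Sigma n F ->
  Lsum mu f n F <= fa_integral Sigma mu f.
Proof.
move=> Hf HP; apply: ub_le_sup; last by exists n, F.
exists (Lsum mu f 1 (fun _ => setT) + B * mu setT) => _ [k [G [HG ->]]].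
apply: Lsum_le_fine => //; [by move=> x; case/andP: (Hf x)|exact: T1_part|exact: fine_T1].
Qed.

Lemma I_le_fine (f : X -> R) d n F : (forall x, 0 <= f x) -> finite_partition Sigma n F ->
  finep f d n F -> fa_integral Sigma mu f <= Lsum mu f n F + d * mu setT.
Proof.
move=> Hf HP Hfine; apply: ge_sup; first by exists (Lsum mu f n F), n, F.
move=> _ [k [G [HG ->]]]; exact: Lsum_le_fine.
Qed.
End Integral.

Lemma lim0 (R : realType) (a b c : R) : 0 <= c ->
  (forall N : nat, a <= b + N.+1%:R^-1 * c) -> a <= b.
Proof.
move=> Hc H; rewrite leNgt; apply/negP => Hba.
have He : 0 < (a - b) / (c + 1) by apply: divr_gt0; lra.
have [k Hk] := ltr_add_invr He; rewrite add0r ltr_pdivlMr in Hk; last by lra.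
have := H k; set t := k.+1%:R^-1 in Hk *.
have Ht : 0 <= t by rewrite invr_ge0.
rewrite mulrDr mulr1 in Hk; set tc := t * c in Hk *; lra.
Qed.

Definition lvlS (R : realType) (X : Type) (f : X -> R) (K : nat) : nat -> set X :=
  fun j => [set x | (j%:R - 1) / K%:R < f x <= j%:R / K%:R].

Definition prodP (X : Type) (F G : nat -> set X) (k : nat) : nat -> set X :=
  fun j => F (j %/ k)%N `&` G (j %% k)%N.

Lemma pos_of_lt_mul j n k : (j < n * k)%N -> (0 < k)%N.
Proof. by case: k => //; rewrite muln0. Qed.

Section Parts.
Variables (R : realType) (X : Type) (Sigma : set (set X)).
Hypothesis HS : is_sigma_algebra Sigma.

Lemma S_le (h : X -> R) e : Sigma_measurable_fun Sigma h -> Sigma [set x | h x <= e].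
Proof. by move=> H; apply: H. Qed.

Lemma S_gt (h : X -> R) e : Sigma_measurable_fun Sigma h -> Sigma [set x | e < h x].
Proof.
move=> H; have -> : [set x | e < h x] = ~` [set x | h x <= e].
  by apply/seteqP; split => x /=; rewrite ltNge => /negP.
exact: (S_C HS (H e)).
Qed.

Lemma lvl_part (f : X -> R) N : Sigma_measurable_fun Sigma f -> (forall x, 0 <= f x <= 1) ->
  finite_partition Sigma N.+2 (lvlS f N.+1) /\ finep f (N.+1%:R^-1) N.+2 (lvlS f N.+1).
Proof.
move=> Hm Hf; have K0 : (0 : R) < N.+1%:R by rewrite ltr0n.
have Ki0 : (0 : R) < N.+1%:R^-1 by rewrite invr_gt0.
split; last first.
  move=> j _ x y /= /andP [_ Hx] /andP [Hy _].
  have E : j%:R / N.+1%:R = (j%:R - 1) / N.+1%:R + N.+1%:R^-1 :> R by rewrite mulrBl mul1r subrK.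
  rewrite E in Hx; apply: (le_trans Hx); rewrite lerD2r; exact: ltW.
split.
- move=> j _; have -> : lvlS f N.+1 j = [set x | f x <= j%:R / N.+1%:R] `&`
      ~` [set x | f x <= (j%:R - 1) / N.+1%:R].
    apply/seteqP; split => x /=.
      by move=> /andP [H1 H2]; split => //; apply/negP; rewrite -ltNge.
    by move=> [H1 /negP H2]; apply/andP; split => //; rewrite ltNge.
  by apply: (S_I HS); [exact: Hm| apply: (S_C HS); exact: Hm].
- move=> i j _ _ [x [/= /andP [Hi1 Hi2] /andP [Hj1 Hj2]]].
  have H1 : (i%:R - 1) / N.+1%:R < j%:R / N.+1%:R :> R by apply: lt_le_trans Hj2.
  have H2 : (j%:R - 1) / N.+1%:R < i%:R / N.+1%:R :> R by apply: lt_le_trans Hi2.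
  rewrite (ltr_pM2r Ki0) ltrBlDr natr1 ltr_nat in H1.
  rewrite (ltr_pM2r Ki0) ltrBlDr natr1 ltr_nat in H2.
  lia.
- apply/seteqP; split => // x _.
  have exP : exists j, f x <= j%:R / N.+1%:R.
    by exists N.+1; rewrite divff ?(lt0r_neq0 K0) //; case/andP: (Hf x).
  case: (ex_minnP exP) => j Pj Hmin; exists j.
    have HN : f x <= N.+1%:R / N.+1%:R by rewrite divff ?(lt0r_neq0 K0) //; case/andP: (Hf x).
    rewrite /=; have := Hmin _ HN; lia.
  rewrite /lvlS /= Pj andbT; case: j Pj Hmin => [|j] Pj Hmin.
    rewrite sub0r mulNr mul1r; case/andP: (Hf x) => H0 _; apply: (lt_le_trans _ H0); by rewrite oppr_lt0.
  rewrite -[j.+1%:R]natr1 addrK; rewrite ltNge; apply/negP => Hj.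
  by have := Hmin j Hj; rewrite ltnn.
Qed.

Lemma prod_part n F k G : finite_partition Sigma n F -> finite_partition Sigma k G ->
  finite_partition Sigma (n * k) (prodP F G k).
Proof.
move=> HF HG; split.
- move=> j Hj; have Hk := pos_of_lt_mul Hj.
  apply: (S_I HS); first by apply: (part_S HF); rewrite ltn_divLR.
  by apply: (part_S HG); rewrite ltn_pmod.
- move=> i j /= Hi Hj [x [[Fi Gi] [Fj Gj]]].
  have Hk := pos_of_lt_mul Hj.
  case: HF => _ HtF _; case: HG => _ HtG _.
  have E1 : (i %/ k = j %/ k)%N.
    by apply: HtF; rewrite /= ?ltn_divLR //; exists x.
  have E2 : (i %% k = j %% k)%N.
    by apply: HtG; rewrite /= ?ltn_pmod //; exists x.
  by rewrite (divn_eq i k) (divn_eq j k) E1 E2.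
- apply/seteqP; split => // x _.
  have [a Ha Fa] := part_cover x HF; have [b Hb Gb] := part_cover x HG.
  have Hk : (0 < k)%N by apply: leq_ltn_trans Hb.
  exists (a * k + b)%N; first by rewrite /=; nia.
  rewrite /prodP divnMDl // divn_small // addn0 modnMDl modn_small //.
Qed.

Lemma prod_fineL (f : X -> R) d n F k G : finep f d n F -> finep f d (n * k) (prodP F G k).
Proof.
move=> H j Hj x y [Fx _] [Fy _]; have Hk := pos_of_lt_mul Hj.
by apply: (H (j %/ k)%N) => //; rewrite ltn_divLR.
Qed.

Lemma prod_fineR (f : X -> R) d n F k G : finep f d k G -> finep f d (n * k) (prodP F G k).
Proof.
move=> H j Hj x y [_ Gx] [_ Gy]; have Hk := pos_of_lt_mul Hj.
by apply: (H (j %% k)%N) => //; rewrite ltn_pmod.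
Qed.

Lemma common_fine (f g : X -> R) N :
  Sigma_measurable_fun Sigma f -> (forall x, 0 <= f x <= 1) ->
  Sigma_measurable_fun Sigma g -> (forall x, 0 <= g x <= 1) ->
  exists n F, [/\ finite_partition Sigma n F, finep f (N.+1%:R^-1) n F & finep g (N.+1%:R^-1) n F].
Proof.
move=> Hmf Hf Hmg Hg.
have [P1 F1] := lvl_part N Hmf Hf; have [P2 F2] := lvl_part N Hmg Hg.
exists (N.+2 * N.+2)%N, (prodP (lvlS f N.+1) (lvlS g N.+1) N.+2); split.
- exact: prod_part.
- exact: prod_fineL.
- exact: prod_fineR.
Qed.
End Parts.

Section Lin.
Variables (R : realType) (X : Type) (Sigma : set (set X)).
Hypothesis HS : is_sigma_algebra Sigma.

Lemma I_meq (mu mu' : set X -> R) f : meq Sigma mu mu' ->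
  fa_integral Sigma mu f = fa_integral Sigma mu' f.
Proof.
move=> H; rewrite /fa_integral; congr sup; apply/seteqP; split => s [n [F [HP ->]]];
  exists n, F; split => //; apply: eq_bigr => i _; rewrite H //; exact: (part_S HP).
Qed.

Lemma I_ext (mu : set X -> R) f g : (forall x, f x = g x) ->
  fa_integral Sigma mu f = fa_integral Sigma mu g.
Proof. by move=> H; have -> : f = g by apply: funext. Qed.

Lemma ba_add (mu nu : set X -> R) : ba_measure Sigma mu -> ba_measure Sigma nu ->
  ba_measure Sigma (fun E => mu E + nu E).
Proof.
move=> Hm Hn; split.
- by rewrite (m0 Hm) (m0 Hn) addr0.
- by move=> E F HE HF HEF; rewrite (mU Hm) // (mU Hn) // addrACA.
have [M1 H1] := mbound Hm; have [M2 H2] := mbound Hn.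
exists (M1 + M2) => E HE; apply: le_trans (ler_normD _ _) _; apply: lerD; [exact: H1|exact: H2].
Qed.

Lemma nn_add (mu nu : set X -> R) : nonneg_measure Sigma mu -> nonneg_measure Sigma nu ->
  nonneg_measure Sigma (fun E => mu E + nu E).
Proof. by move=> H1 H2 E HE; apply: addr_ge0; [apply: H1|apply: H2]. Qed.

Lemma Lsum_add (mu nu : set X -> R) f n F :
  Lsum (fun E => mu E + nu E) f n F = Lsum mu f n F + Lsum nu f n F.
Proof. by rewrite /Lsum -big_split; apply: eq_bigr => i _; rewrite mulrDr. Qed.

Lemma Ilin_mu (mu nu : set X -> R) f :
  ba_measure Sigma mu -> nonneg_measure Sigma mu ->
  ba_measure Sigma nu -> nonneg_measure Sigma nu ->
  Sigma_measurable_fun Sigma f -> (forall x, 0 <= f x <= 1) ->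
  fa_integral Sigma (fun E => mu E + nu E) f = fa_integral Sigma mu f + fa_integral Sigma nu f.
Proof.
move=> Bm Nm Bn Nn Hm Hf.
have Bmn := ba_add Bm Bn; have Nmn := nn_add Nm Nn.
have Hf0 : forall x, 0 <= f x by move=> x; case/andP: (Hf x).
have Hc : 0 <= mu setT + nu setT by apply: addr_ge0; [apply: Nm|apply: Nn]; exact: (S_T HS).
apply/eqP; rewrite eq_le; apply/andP; split.
  apply: (lim0 Hc) => N; have [HP Hfi] := lvl_part HS N Hm Hf.
  apply: le_trans (I_le_fine HS Bmn Nmn Hf0 HP Hfi) _.
  rewrite Lsum_add lerD2r; apply: lerD; exact: (I_ge_L HS _ _ Hf HP).
apply: (lim0 Hc) => N; have [HP Hfi] := lvl_part HS N Hm Hf.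
apply: le_trans (lerD (I_le_fine HS Bm Nm Hf0 HP Hfi) (I_le_fine HS Bn Nn Hf0 HP Hfi)) _.
rewrite addrACA -mulrDr -Lsum_add lerD2r; exact: (I_ge_L HS _ _ Hf HP).
Qed.

Lemma finep_add (f g : X -> R) d e n F : finep f d n F -> finep g e n F ->
  finep (fun x => f x + g x) (d + e) n F.
Proof.
move=> Hf Hg i Hi x y Fx Fy; rewrite addrACA; apply: lerD; [exact: (Hf i Hi)|exact: (Hg i Hi)].
Qed.

Variable mu : set X -> R.
Hypothesis Hmu : ba_measure Sigma mu.
Hypothesis Hnn : nonneg_measure Sigma mu.

Lemma Ilin_f (f g : X -> R) :
  Sigma_measurable_fun Sigma f -> (forall x, 0 <= f x <= 1) ->
  Sigma_measurable_fun Sigma g -> (forall x, 0 <= g x <= 1) ->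
  fa_integral Sigma mu (fun x => f x + g x) = fa_integral Sigma mu f + fa_integral Sigma mu g.
Proof.
move=> Hmf Hf Hmg Hg.
have Hf0 : forall x, 0 <= f x by move=> x; case/andP: (Hf x).
have Hg0 : forall x, 0 <= g x by move=> x; case/andP: (Hg x).
have Hfg0 : forall x, 0 <= f x + g x by move=> x; apply: addr_ge0.
have Hfg : forall x, 0 <= f x + g x <= 2.
  by move=> x; case/andP: (Hf x) => ? ?; case/andP: (Hg x) => ? ?; apply/andP; split; lra.
have HX : 0 <= mu setT by apply: Hnn; exact: (S_T HS).
apply/eqP; rewrite eq_le; apply/andP; split.
  have Hc : 0 <= 4 * mu setT by apply: mulr_ge0.
  apply: (lim0 Hc) => N; have [n [F [HP Ff Fg]]] := common_fine HS N Hmf Hf Hmg Hg.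
  set t := N.+1%:R^-1 in Ff Fg *.
  apply: le_trans (I_le_fine HS Hmu Hnn Hfg0 HP (finep_add Ff Fg)) _.
  have H1 : Lsum mu (fun x => f x + g x) n F <= Lsum mu f n F + Lsum mu g n F + (t + t) * mu setT.
    rewrite /Lsum -(sum_part HS Hmu HP) mulr_sumr -!big_split /=; apply: ler_sum => i _.
    rewrite -!mulrDl; case: (pselect (F i !=set0)) => [[x Fx]|H0]; last first.
      have -> : F i = set0 by apply/seteqP; split => // y Hy; apply: H0; exists y.
      by rewrite (m0 Hmu) !mulr0.
    apply: ler_wpM2r; first by apply: Hnn; exact: (part_S HP (ltn_ord i)).
    apply: le_trans (inf_le_pt Hfg0 Fx) _.
    have Hix : f x <= inf (f @` F i) + t.
      rewrite -lerBlDr; apply: (le_inf_pt Fx) => y Fy; rewrite lerBlDr; exact: (Ff _ (ltn_ord i)).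
    have Hiy : g x <= inf (g @` F i) + t.
      rewrite -lerBlDr; apply: (le_inf_pt Fx) => y Fy; rewrite lerBlDr; exact: (Fg _ (ltn_ord i)).
    lra.
  apply: le_trans (lerD H1 (lexx _)) _.
  have H2 : Lsum mu f n F + Lsum mu g n F <= fa_integral Sigma mu f + fa_integral Sigma mu g.
    by apply: lerD; [exact: (I_ge_L HS _ _ Hf HP)|exact: (I_ge_L HS _ _ Hg HP)].
  have -> : Lsum mu f n F + Lsum mu g n F + (t + t) * mu setT + (t + t) * mu setT =
    Lsum mu f n F + Lsum mu g n F + t * (4 * mu setT) by ring.
  by rewrite lerD2r.
have Hc : 0 <= 2 * mu setT by apply: mulr_ge0.
apply: (lim0 Hc) => N; have [n [F [HP Ff Fg]]] := common_fine HS N Hmf Hf Hmg Hg.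
set t := N.+1%:R^-1 in Ff Fg *.
apply: le_trans (lerD (I_le_fine HS Hmu Hnn Hf0 HP Ff) (I_le_fine HS Hmu Hnn Hg0 HP Fg)) _.
have H1 : Lsum mu f n F + Lsum mu g n F <= Lsum mu (fun x => f x + g x) n F.
  rewrite /Lsum -big_split /=; apply: ler_sum => i _.
  rewrite -mulrDl; case: (pselect (F i !=set0)) => [[x Fx]|H0]; last first.
    have -> : F i = set0 by apply/seteqP; split => // y Hy; apply: H0; exists y.
    by rewrite (m0 Hmu) !mulr0.
  apply: ler_wpM2r; first by apply: Hnn; exact: (part_S HP (ltn_ord i)).
  apply: (le_inf_pt Fx) => y Fy; apply: lerD; exact: inf_le_pt.
have H2 := I_ge_L HS Hmu Hnn Hfg HP.
have -> : Lsum mu f n F + t * mu setT + (Lsum mu g n F + t * mu setT) =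
  (Lsum mu f n F + Lsum mu g n F) + t * (2 * mu setT) by ring.
rewrite lerD2r; exact: le_trans H1 H2.
Qed.

Lemma I_const1 (x0 : X) : fa_integral Sigma mu (fun _ => 1) = mu setT.
Proof.
have H1 : forall x : X, 0 <= (1 : R) <= (1 : R) by move=> x; rewrite ler01 lexx.
have HT := T1_part HS.
have Hfi : finep (fun _ : X => (1 : R)) 0 1 (fun _ => setT) by move=> i Hi x y _ _; rewrite addr0.
have Himg : [set (1 : R) | _ in [set: X]] = [set 1].
  by apply/seteqP; split => [_ [x _ <-] //| _ ->]; exists x0.
apply/eqP; rewrite eq_le; apply/andP; split.
  apply: le_trans (I_le_fine HS Hmu Hnn (fun _ => ler01) HT Hfi) _.
  by rewrite Lsum_T1 Himg inf1 mul0r addr0 mul1r.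
have := I_ge_L HS Hmu Hnn (f:=fun _ => 1) H1 HT; by rewrite Lsum_T1 Himg inf1 mul1r.
Qed.

Lemma I_tail (h : X -> R) e : Sigma_measurable_fun Sigma h -> (forall x, 0 <= h x <= 1) ->
  0 <= e -> fa_integral Sigma mu h <= e * mu setT + mu [set x | e < h x].
Proof.
move=> Hm Hh He.
have Hh0 : forall x, 0 <= h x by move=> x; case/andP: (Hh x).
have HX : 0 <= mu setT by apply: Hnn; exact: (S_T HS).
have HSS : Sigma [set x | e < h x] by apply: S_gt.
apply: (lim0 HX) => N; have [HP Hfi] := lvl_part HS N Hm Hh.
apply: le_trans (I_le_fine HS Hmu Hnn Hh0 HP Hfi) _; rewrite lerD2r.
rewrite /Lsum -(sum_part HS Hmu HP) -(FA_part HS Hmu HP HSS) mulr_sumr -big_split /=.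
apply: ler_sum => i _.
have HFi := part_S HP (ltn_ord i).
have HSFi : 0 <= mu ([set x | e < h x] `&` lvlS h N.+1 i) by apply: Hnn; apply: (S_I HS).
have HFi0 : 0 <= mu (lvlS h N.+1 i) by apply: Hnn.
case: (pselect (exists2 y, lvlS h N.+1 i y & h y <= e)) => [[y Fy Hy]|Hno].
  apply: le_trans (ler_wpM2r HFi0 (le_trans (inf_le_pt Hh0 Fy) Hy)) _.
  by rewrite mulrC lerDl.
case: (pselect (lvlS h N.+1 i !=set0)) => [[x Fx]|H0]; last first.
  have E0 : lvlS h N.+1 i = set0 by apply/seteqP; split => // y Hy; apply: H0; exists y.
  by rewrite E0 setI0 (m0 Hmu) !mulr0 addr0.
have -> : [set x | e < h x] `&` lvlS h N.+1 i = lvlS h N.+1 i.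
  apply/seteqP; split => [y [] //|y Fy]; split => //=; rewrite ltNge; apply/negP => Hy.
  by apply: Hno; exists y.
have Hx1 : h x <= 1 by case/andP: (Hh x).
apply: le_trans (ler_wpM2r HFi0 (le_trans (inf_le_pt Hh0 Fx) Hx1)) _.
by rewrite mul1r lerDr; apply: mulr_ge0.
Qed.
End Lin.

Lemma cvg_ev (R : realType) (u : nat -> R) l : u @ \oo --> l ->
  forall e, 0 < e -> exists N, forall n, (N <= n)%N -> `|l - u n| <= e.
Proof.
move/cvgrPdist_le => H e He; have [N _ HN] := H e He; exists N => n Hn; exact: HN.
Qed.

Lemma sup_add_le (R : realType) (A B : set R) c : A !=set0 -> B !=set0 ->
  (forall a b, A a -> B b -> a + b <= c) -> sup A + sup B <= c.
Proof.
move=> [a0 Ha0] [b0 Hb0] H.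
have HA : forall b, B b -> sup A <= c - b.
  by move=> b Hb; apply: ge_sup; [exists a0|move=> a Ha; rewrite lerBrDr; exact: H].
rewrite -lerBrDl; apply: ge_sup; first by exists b0.
by move=> b Hb; rewrite lerBrDl addrC -lerBrDl; exact: HA.
Qed.

Lemma inf_add_ge (R : realType) (A B : set R) c : A !=set0 -> B !=set0 ->
  (forall a b, A a -> B b -> c <= a + b) -> c <= inf A + inf B.
Proof.
move=> [a0 Ha0] [b0 Hb0] H.
have HA : forall b, B b -> c - b <= inf A.
  by move=> b Hb; apply: lb_le_inf; [exists a0|move=> a Ha; rewrite lerBlDr; exact: H].
rewrite -lerBlDl; apply: lb_le_inf; first by exists b0.
by move=> b Hb; rewrite lerBlDl addrC -lerBlDl; exact: HA.
Qed.

Section CA.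
Variables (R : realType) (X : Type) (Sigma : set (set X)).
Hypothesis HS : is_sigma_algebra Sigma.

Lemma tailId (lam : set X -> R) (E : nat -> set X) N : ba_measure Sigma lam ->
  (forall n, Sigma (E n)) -> trivIset setT E ->
  lam (\bigcup_n E n) = \sum_(0 <= i < N) lam (E i) +
     lam (\bigcup_n E n `\` \big[setU/set0]_(0 <= i < N) E i).
Proof.
move=> Hl HE Ht.
have HU : Sigma (\big[setU/set0]_(0 <= i < N) E i) by apply: (S_bigU HS) => //.
rewrite (mSplit HS Hl (S_bigcup HS HE) HU) setIidr; last first.
  by move=> x /bigU_mem [i _ Hx]; exists i.
by rewrite (FA_big HS Hl) // => i j _ _; exact: (disj_triv Ht I I).
Qed.

Lemma S_tail (E : nat -> set X) N : (forall n, Sigma (E n)) ->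
  Sigma (\bigcup_n E n `\` \big[setU/set0]_(0 <= i < N) E i).
Proof. by move=> HE; apply: (S_D HS); [exact: (S_bigcup HS)|exact: (S_bigU HS)]. Qed.

Lemma CA_crit (lam : set X -> R) : ba_measure Sigma lam -> nonneg_measure Sigma lam ->
  (forall E : nat -> set X, (forall n, Sigma (E n)) -> trivIset setT E ->
     forall e, 0 < e -> exists N, lam (\bigcup_n E n) <= \sum_(0 <= i < N) lam (E i) + e) ->
  countably_additive Sigma lam.
Proof.
move=> Hl Hn H E HE Ht; apply/cvgrPdist_le => e He.
have [N HN] := H E HE Ht e He; exists N => // n /= Hnn.
have Hmon : \sum_(0 <= i < N) lam (E i) <= \sum_(0 <= i < n) lam (E i).
  rewrite (big_cat_nat (leq0n N) Hnn) /= lerDl; apply: sumr_ge0 => i _; exact: Hn.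
have Ht0 : 0 <= lam (\bigcup_n0 E n0 `\` \big[setU/set0]_(0 <= i < n) E i) by apply: Hn; exact: S_tail.
have Eq := tailId n Hl HE Ht.
move: HN Hmon Ht0 Eq; set a := \sum_(0 <= i < N) _; set b := \sum_(0 <= i < n) _.
set t := lam (_ `\` _); set L := lam _ => HN Hmon Ht0 Eq.
have -> : L - b = t by rewrite Eq addrC addKr.
rewrite ger0_norm //; lra.
Qed.
End CA.

Section CA2.
Variables (R : realType) (X : Type) (Sigma : set (set X)).
Hypothesis HS : is_sigma_algebra Sigma.

Lemma ca_cont_down (mu : set X -> R) (S : nat -> set X) :
  ba_measure Sigma mu -> nonneg_measure Sigma mu -> countably_additive Sigma mu ->
  (forall n, Sigma (S n)) -> (forall n, S n.+1 `<=` S n) ->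
  (forall x, exists N, ~ S N x) ->
  forall e, 0 < e -> exists N, mu (S N) <= e.
Proof.
move=> Hb Hn Hc HSn Hdec Hex e He.
have Hdec2 : forall i j, (i <= j)%N -> S j `<=` S i.
  move=> i j /subnK <-; elim: (j - i)%N => [|k IH] //=.
  by rewrite addSn => x /Hdec /IH.
pose D k := S k `\` S k.+1.
have HD : forall k, Sigma (D k) by move=> k; apply: (S_D HS).
have Ht : trivIset setT D.
  move=> i j _ _ [x [[Si nSi] [Sj nSj]]]; case: (ltngtP i j) => // Hij.
    by exfalso; apply: nSi; apply: (Hdec2 i.+1 j).
  by exfalso; apply: nSj; apply: (Hdec2 j.+1 i).
have HU : \bigcup_n D n = S 0%N.
  apply/seteqP; split => x.
    by case=> k _ [Sk _]; apply: (Hdec2 0%N k).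
  move=> S0x.
  have exP : exists N, `[< ~ S N x >] by have [N HN] := Hex x; exists N; apply/asboolP.
  case: (ex_minnP exP) => N /asboolP HN Hmin.
  case: N HN Hmin => [|N] HN Hmin; first by [].
  exists N => //; split => //.
  apply: contrapT => HSN; have := Hmin N; rewrite ltnn => H.
  by have : false by apply: H; apply/asboolP.
have Hsum : forall N, \sum_(0 <= k < N) mu (D k) = mu (S 0%N) - mu (S N).
  elim=> [|N IH]; first by rewrite big_geq // subrr.
  rewrite big_nat_recr //= IH /D (mDsub HS Hb) //; first by ring.
have [N HN] := cvg_ev (Hc D HD Ht) He.
exists N; have := HN N (leqnn N); rewrite Hsum HU.
have -> : mu (S 0%N) - (mu (S 0%N) - mu (S N)) = mu (S N) by ring.
by rewrite ger0_norm //; apply: Hn.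
Qed.

Lemma ca_dom (lam nu : set X -> R) :
  ba_measure Sigma lam -> nonneg_measure Sigma lam ->
  ba_measure Sigma nu -> countably_additive Sigma nu ->
  (forall E, Sigma E -> lam E <= nu E) -> countably_additive Sigma lam.
Proof.
move=> Bl Nl Bn Cn Hle; apply: CA_crit => // E HE Ht e He.
have [N HN] := cvg_ev (Cn E HE Ht) He; exists N.
rewrite (tailId HS N Bl HE Ht) lerD2l.
apply: le_trans (Hle _ (S_tail HS N HE)) _.
have := HN N (leqnn N); rewrite (tailId HS N Bn HE Ht).
set a := \sum_(0 <= i < N) _; set b := nu _ => H.
by apply: le_trans (ler_norm _) _; rewrite -normrN; move: H; rewrite addrC addKr; rewrite normrN.
Qed.
End CA2.

Lemma disjP (X : Type) (A B : set X) : A `&` B = set0 -> forall x, A x -> B x -> False.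
Proof. by move/seteqP => [H _] x Ax Bx; apply: (H x (conj Ax Bx)). Qed.

Section Pos.
Variables (R : realType) (X : Type) (Sigma : set (set X)).
Hypothesis HS : is_sigma_algebra Sigma.

Lemma pos_part (d q : set X -> R) : ba_measure Sigma d -> countably_additive Sigma d ->
  purely_fa Sigma q -> (forall E, Sigma E -> d E <= q E) -> forall E, Sigma E -> d E <= 0.
Proof.
move=> Bd Cd [Bq Nq Pq] Hle.
have [M HM] := mbound Bd.
pose dset E := [set d C | C in [set C | Sigma C /\ C `<=` E]].
pose dp E := sup (dset E).
have hne : forall E, dset E !=set0.
  by move=> E; exists (d set0), set0 => //; split; [exact: (S_0 HS)|exact: sub0set].
have hub : forall E, has_ubound (dset E).
  by move=> E; exists M => _ [C [HC _] <-]; exact: le_trans (ler_norm _) (HM _ HC).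
have dp_ge : forall E C, Sigma C -> C `<=` E -> d C <= dp E.
  by move=> E C HC HCE; apply: (ub_le_sup (hub E)); exists C.
have dp_le : forall E, Sigma E -> dp E <= q E.
  move=> E HE; apply: ge_sup (hne E) _ => _ [C [HC HCE] <-].
  exact: le_trans (Hle C HC) (mmono HS Bq Nq HE HC HCE).
have dp0 : forall E, 0 <= dp E.
  by move=> E; rewrite -(m0 Bd); apply: dp_ge; [exact: (S_0 HS)|exact: sub0set].
have Bdp : ba_measure Sigma dp.
  split.
  - apply/eqP; rewrite eq_le dp0 andbT; have := dp_le set0 (S_0 HS); by rewrite (m0 Bq).
  - move=> E F HE HF HEF; apply/eqP; rewrite eq_le; apply/andP; split.
      apply: ge_sup (hne _) _ => _ [C [HC HCE] <-].
      rewrite (mSplit HS Bd HC HE); apply: lerD; apply: dp_ge.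
      + exact: (S_I HS).
      + exact: subIsetr.
      + exact: (S_D HS).
      + by move=> x [Cx nEx]; case: (HCE x Cx).
    apply: sup_add_le (hne _) (hne _) _ => _ _ [C1 [H1 S1] <-] [C2 [H2 S2] <-].
    rewrite -(mU Bd H1 H2); last first.
      by apply/seteqP; split => // x [/S1 Ex /S2 Fx]; apply: (disjP HEF Ex Fx).
    by apply: dp_ge; [exact: (S_U HS)|exact: setUSS].
  - exists (q setT) => E HE; rewrite ger0_norm //.
    exact: le_trans (dp_le E HE) (mmono HS Bq Nq (S_T HS) HE (@subsetT _ E)).
have Ndp : nonneg_measure Sigma dp by move=> E _; exact: dp0.
have Cdp : countably_additive Sigma dp.
  apply: (CA_crit HS Bdp Ndp) => E HE Ht e He.
  have He2 : 0 < e / 2 by apply: divr_gt0.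
  have [_ [C [HC HCA] <-] HCl] := sup_adherent He2 (conj (hne (\bigcup_n E n)) (hub (\bigcup_n E n))).
  have HCE : forall n, Sigma (C `&` E n) by move=> n; apply: (S_I HS).
  have HtC : trivIset setT (fun n => C `&` E n).
    by move=> i j _ _ [x [[_ a] [_ b]]]; apply: Ht => //; exists x.
  have UC : \bigcup_n (C `&` E n) = C by rewrite -setI_bigcupr setIidl.
  have [N HN] := cvg_ev (Cd _ HCE HtC) He2; exists N.
  have := HN N (leqnn N); rewrite UC => H.
  have Hs : \sum_(0 <= i < N) d (C `&` E i) <= \sum_(0 <= i < N) dp (E i).
    by apply: ler_sum => i _; apply: dp_ge; [exact: HCE|exact: subIsetr].
  have H2 := le_trans (ler_norm _) H.
  move: HCl H2 Hs; rewrite /dp; set s1 := \sum_(0 <= i < N) d _; set s2 := \sum_(0 <= i < N) sup _.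
  move=> HCl H2 Hs; lra.
have Hz := Pq dp Bdp Cdp (fun E HE => introT andP (conj (dp0 E) (dp_le E HE))).
move=> E HE; apply: le_trans (dp_ge E E HE (@subset_refl _ E)) _; by rewrite Hz.
Qed.
End Pos.

Section Meet.
Variables (R : realType) (X : Type) (Sigma : set (set X)).
Hypothesis HS : is_sigma_algebra Sigma.
Variables (mu nu : set X -> R).
Hypotheses (Bm : ba_measure Sigma mu) (Nm : nonneg_measure Sigma mu)
  (Bn : ba_measure Sigma nu) (Nn : nonneg_measure Sigma nu).

Let Mset E := [set mu C + nu (E `\` C) | C in [set C | Sigma C /\ C `<=` E]].

Lemma meet_ne E : Mset E !=set0.
Proof. by exists (mu set0 + nu (E `\` set0)), set0 => //; split; [exact: (S_0 HS)|exact: sub0set]. Qed.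

Lemma meet_lb E : Sigma E -> has_lbound (Mset E).
Proof.
move=> HE; exists 0 => _ [C [HC _] <-]; apply: addr_ge0; [exact: Nm|apply: Nn; exact: (S_D HS)].
Qed.

Lemma meet_le E C : Sigma E -> Sigma C -> C `<=` E -> meas_meet Sigma mu nu E <= mu C + nu (E `\` C).
Proof. by move=> HE HC HCE; apply: (ge_inf (meet_lb HE)); exists C. Qed.

Lemma meet_ge0 E : Sigma E -> 0 <= meas_meet Sigma mu nu E.
Proof.
move=> HE; apply: lb_le_inf (meet_ne E) _ => _ [C [HC _] <-].
apply: addr_ge0; [exact: Nm|apply: Nn; exact: (S_D HS)].
Qed.

Lemma meet_le_mu E : Sigma E -> meas_meet Sigma mu nu E <= mu E.
Proof. by move=> HE; apply: le_trans (meet_le HE HE (@subset_refl _ E)) _; rewrite setDv (m0 Bn) addr0. Qed.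

Lemma meet_le_nu E : Sigma E -> meas_meet Sigma mu nu E <= nu E.
Proof.
move=> HE; apply: le_trans (meet_le HE (S_0 HS) (@sub0set _ E)) _; by rewrite setD0 (m0 Bm) add0r.
Qed.

Lemma meet_ba : ba_measure Sigma (meas_meet Sigma mu nu).
Proof.
split.
- apply/eqP; rewrite eq_le meet_ge0 ?andbT; last exact: (S_0 HS).
  by have := meet_le_mu (S_0 HS); rewrite (m0 Bm).
- move=> E F HE HF HEF; apply/eqP; rewrite eq_le; apply/andP; split; last first.
    apply: lb_le_inf (meet_ne _) _ => _ [C [HC HCEF] <-].
    have dj := disjP HEF.
    rewrite (mSplit HS Bm HC HE).
    have -> : C `\` E = C `&` F.
      apply/seteqP; split => x /= [Cx Hx]; split => //.
        by case: (HCEF x Cx).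
      by move=> Ex; apply: (dj x Ex Hx).
    have HEFC : Sigma ((E `|` F) `\` C) by apply: (S_D HS) => //; apply: (S_U HS).
    rewrite (mSplit HS Bn HEFC HE).
    have -> : ((E `|` F) `\` C) `&` E = E `\` (C `&` E).
      apply/seteqP; split => x /=; first by move=> [[_ nC] Ex]; split => // -[Cx _].
      by move=> [Ex nCE]; split => //; split; [left|move=> Cx; apply: nCE].
    have -> : ((E `|` F) `\` C) `\` E = F `\` (C `&` F).
      apply/seteqP; split => x /=.
        by move=> [[[Ex|Fx] nC] nE] //; split => // -[Cx _].
      by move=> [Fx nCF]; split; [split; [right|move=> Cx; apply: nCF]|move=> Ex; apply: (dj x Ex Fx)].
    rewrite addrACA; apply: lerD; apply: meet_le => //; (try apply: (S_I HS)) => //;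
      exact: subIsetr.
  apply: inf_add_ge (meet_ne _) (meet_ne _) _ => _ _ [C1 [H1 S1] <-] [C2 [H2 S2] <-].
  have HEF' : Sigma (E `|` F) by apply: (S_U HS).
  apply: le_trans (meet_le HEF' (S_U HS H1 H2) (setUSS S1 S2)) _.
  have dj := disjP HEF.
  rewrite (mU Bm H1 H2); last first.
    by apply/seteqP; split => // x [/S1 Ex /S2 Fx]; apply: (dj x Ex Fx).
  have -> : (E `|` F) `\` (C1 `|` C2) = (E `\` C1) `|` (F `\` C2).
    apply/seteqP; split => x /=.
      by move=> [[Ex|Fx] nC]; [left|right]; split => // Cx; apply: nC; [left|right].
    move=> [[Ex nC1]|[Fx nC2]]; split; [by left| |by right|].
      by move=> [//|/S2 Fx]; apply: (dj x Ex Fx).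
    by move=> [/S1 Ex|//]; apply: (dj x Ex Fx).
  rewrite (mU Bn); [|exact: (S_D HS)|exact: (S_D HS)|].
    by rewrite addrACA.
  by apply/seteqP; split => // x [[Ex _] [Fx _]]; apply: (dj x Ex Fx).
- exists (mu setT) => E HE; rewrite ger0_norm ?meet_ge0 //.
  exact: le_trans (meet_le_mu HE) (mmono HS Bm Nm (S_T HS) HE (@subsetT _ E)).
Qed.

Lemma meet_nn : nonneg_measure Sigma (meas_meet Sigma mu nu).
Proof. by move=> E HE; exact: meet_ge0. Qed.
End Meet.

Section Closure.
Variables (R : realType) (X : Type) (Sigma : set (set X)).
Hypothesis HS : is_sigma_algebra Sigma.

Lemma ba_zero : ba_measure Sigma (fun _ : set X => (0 : R)).
Proof. by split => // [E F _ _ _|]; [rewrite addr0|exists 0 => E _; rewrite normr0]. Qed.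

Lemma ca_zero : countably_additive Sigma (fun _ : set X => (0 : R)).
Proof.
move=> F _ _; have -> : (fun n : nat => \sum_(0 <= i < n) (0 : R)) = (fun _ => 0).
  by apply: funext => n; rewrite big1.
exact: cvg_cst.
Qed.

Lemma ca_add (mu nu : set X -> R) : countably_additive Sigma mu -> countably_additive Sigma nu ->
  countably_additive Sigma (fun E => mu E + nu E).
Proof.
move=> Hm Hn F HF Ht.
have -> : (fun n : nat => \sum_(0 <= i < n) (mu (F i) + nu (F i))) =
  (fun n => \sum_(0 <= i < n) mu (F i)) + (fun n => \sum_(0 <= i < n) nu (F i)).
  by apply: funext => n; rewrite big_split.
by apply: cvgD; [exact: Hm|exact: Hn].
Qed.

Lemma ba_scale (a : R) (mu : set X -> R) : ba_measure Sigma mu -> ba_measure Sigma (fun E => a * mu E).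
Proof.
move=> Hm; split.
- by rewrite (m0 Hm) mulr0.
- by move=> E F HE HF HEF; rewrite (mU Hm) // mulrDr.
have [M HM] := mbound Hm; exists (`|a| * M) => E HE; rewrite normrM.
by apply: ler_wpM2l => //; exact: HM.
Qed.

Lemma ca_scale (a : R) (mu : set X -> R) : countably_additive Sigma mu ->
  countably_additive Sigma (fun E => a * mu E).
Proof.
move=> Hm F HF Ht.
have -> : (fun n : nat => \sum_(0 <= i < n) (a * mu (F i))) =
  (fun n => a * \sum_(0 <= i < n) mu (F i)) by apply: funext => n; rewrite mulr_sumr.
by apply: cvgMl_tmp; exact: Hm.
Qed.

Lemma nn_scale (a : R) (mu : set X -> R) : 0 <= a -> nonneg_measure Sigma mu ->
  nonneg_measure Sigma (fun E => a * mu E).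
Proof. by move=> Ha Hm E HE; apply: mulr_ge0 => //; exact: Hm. Qed.

Lemma sum_closed (P : (set X -> R) -> Prop) (F : nat -> set X -> R) n :
  P (fun _ => 0) -> (forall f g, P f -> P g -> P (fun E => f E + g E)) ->
  (forall k, (k < n)%N -> P (F k)) -> P (fun E => \sum_(k < n) F k E).
Proof.
move=> H0 Hadd; elim: n => [|n IH] HF.
  by have -> : (fun E => \sum_(k < 0) F k E) = (fun _ => 0) by apply: funext => E; rewrite big_ord0.
have -> : (fun E => \sum_(k < n.+1) F k E) = (fun E => \sum_(k < n) F k E + F n E).
  by apply: funext => E; rewrite big_ord_recr.
apply: Hadd; last exact: HF.
by apply: IH => k Hk; apply: HF; apply: ltnW.
Qed.

Lemma pfa_zero : purely_fa Sigma (fun _ : set X => (0 : R)).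
Proof.
split; [exact: ba_zero|by []|].
move=> lam _ _ H E HE; have /andP [H1 H2] := H E HE; apply/eqP; rewrite eq_le H1 H2 //.
Qed.

Lemma meet_mono (mu nu mu' nu' : set X -> R) E :
  ba_measure Sigma mu -> nonneg_measure Sigma mu -> ba_measure Sigma nu -> nonneg_measure Sigma nu ->
  (forall E, Sigma E -> mu E <= mu' E) -> (forall E, Sigma E -> nu E <= nu' E) -> Sigma E ->
  meas_meet Sigma mu nu E <= meas_meet Sigma mu' nu' E.
Proof.
move=> Bm Nm Bn Nn H1 H2 HE; apply: lb_le_inf.
  by exists (mu' set0 + nu' (E `\` set0)), set0 => //; split; [exact: (S_0 HS)|exact: sub0set].
move=> _ [C [HC HCE] <-]; apply: le_trans (meet_le HS Nm Nn HE HC HCE) _.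
apply: lerD; [exact: H1|apply: H2; exact: (S_D HS)].
Qed.

Lemma ca_pfa_disj (c q : set X -> R) : ba_measure Sigma c -> nonneg_measure Sigma c ->
  countably_additive Sigma c -> purely_fa Sigma q -> meas_disjoint Sigma c q.
Proof.
move=> Bc Nc Cc [Bq Nq Pq].
apply: Pq; first exact: (meet_ba HS Bc Nc Bq Nq).
  apply: (ca_dom HS (meet_ba HS Bc Nc Bq Nq) (meet_nn HS Nc Nq) Bc Cc).
  by move=> E HE; exact: (meet_le_mu HS Nc Bq Nq HE).
by move=> E HE; rewrite (meet_ge0 HS Nc Nq HE) (meet_le_nu HS Bc Nc Nq HE).
Qed.

Lemma pfa_add (q1 q2 : set X -> R) : purely_fa Sigma q1 -> purely_fa Sigma q2 ->
  purely_fa Sigma (fun E => q1 E + q2 E).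
Proof.
move=> H1 H2; have H1' := H1; have H2' := H2.
case: H1 => B1 N1 P1; case: H2 => B2 N2 P2.
split; [exact: ba_add|exact: nn_add|].
move=> lam Bl Cl Hl.
have Nl : nonneg_measure Sigma lam by move=> E HE; case/andP: (Hl E HE).
have Hz := ca_pfa_disj Bl Nl Cl H1'.
apply: P2 => // E HE; rewrite (Nl E HE) /=.
rewrite -subr_le0 -(Hz E HE); apply: lb_le_inf.
  by exists (lam set0 + q1 (E `\` set0)), set0 => //; split; [exact: (S_0 HS)|exact: sub0set].
move=> _ [C [HC HCE] <-].
have HEC : Sigma (E `\` C) by exact: (S_D HS).
have := mDsub HS Bl HE HC HCE.
have /andP [_ H3] := Hl _ HEC.
have H4 := mmono HS B2 N2 HE HEC (@subDsetl _ E C).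
lra.
Qed.

Lemma pfa_scale (a : R) (q : set X -> R) : 0 < a -> purely_fa Sigma q ->
  purely_fa Sigma (fun E => a * q E).
Proof.
move=> Ha [Bq Nq Pq]; split; [exact: ba_scale|exact: nn_scale (ltW Ha) Nq|].
move=> lam Bl Cl Hl.
have Hz := Pq (fun E => a^-1 * lam E) (ba_scale a^-1 Bl) (ca_scale (a:=a^-1) Cl).
move=> E HE; have /andP [H1 H2] := Hl E HE.
have : a^-1 * lam E = 0.
  apply: Hz => // F HF; have /andP [G1 G2] := Hl F HF; apply/andP; split.
    by apply: mulr_ge0 => //; rewrite invr_ge0 ltW.
  by rewrite ler_pdivrMl // .
by move/eqP; rewrite mulf_eq0 invr_eq0 (gt_eqF Ha) /= => /eqP.
Qed.
End Closure.

Section Markov.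
Variables (R : realType) (X : Type) (Sigma : set (set X)).
Hypothesis HS : is_sigma_algebra Sigma.
Variable p : X -> set X -> R.
Hypothesis Hp : transition_function Sigma p.
Variable x0 : X.

Lemma pf_meas E : Sigma E -> Sigma_measurable_fun Sigma (fun x => p x E).
Proof. by case: Hp => _ _ H _; apply: H. Qed.
Lemma pf_01 E : Sigma E -> forall x, 0 <= p x E <= 1.
Proof. by case: Hp => H _ _ _ HE x; apply: H. Qed.
Lemma p_ba x : ba_measure Sigma (p x).
Proof. by case: Hp => _ _ _ H; case: (H x). Qed.
Lemma p_ca x : countably_additive Sigma (p x).
Proof. by case: Hp => _ _ _ H; case: (H x). Qed.
Lemma p_nn x : nonneg_measure Sigma (p x).
Proof. by move=> E HE; case/andP: (pf_01 HE x). Qed.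

Variable mu : set X -> R.
Hypotheses (Bm : ba_measure Sigma mu) (Nm : nonneg_measure Sigma mu).

Lemma A_fa E F : Sigma E -> Sigma F -> E `&` F = set0 ->
  markov_op Sigma p mu (E `|` F) = markov_op Sigma p mu E + markov_op Sigma p mu F.
Proof.
move=> HE HF HEF; rewrite /markov_op.
rewrite (I_ext Sigma _ (g := fun x => p x E + p x F)); last by move=> x; rewrite (mU (p_ba x)).
apply: (Ilin_f HS Bm Nm); [exact: pf_meas|exact: pf_01|exact: pf_meas|exact: pf_01].
Qed.

Lemma A_nn : nonneg_measure Sigma (markov_op Sigma p mu).
Proof.
move=> E HE; rewrite /markov_op.
apply: le_trans (I_ge_L HS Bm Nm (pf_01 HE) (T1_part HS)); rewrite Lsum_T1.
apply: mulr_ge0; last by apply: Nm; exact: (S_T HS).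
apply: (le_inf_pt (x := x0)) => // y _; by case/andP: (pf_01 HE y).
Qed.

Lemma A_mass : markov_op Sigma p mu setT = mu setT.
Proof.
rewrite /markov_op (I_ext Sigma _ (g := fun _ => 1)); first exact: (I_const1 HS Bm Nm x0).
by move=> x; case: Hp => _ H _ _; apply: H.
Qed.

Lemma A_ba : ba_measure Sigma (markov_op Sigma p mu).
Proof.
have H0 : markov_op Sigma p mu set0 = 0.
  have := A_fa (S_0 HS) (S_0 HS) (setI0 set0); rewrite setU0 => H; lra.
split => //; first by move=> E F HE HF HEF; apply: A_fa.
exists (mu setT) => E HE; rewrite ger0_norm; last exact: A_nn.
rewrite -A_mass -(setUCr E) A_fa //; first by rewrite lerDl; apply: A_nn; exact: (S_C HS).
  exact: (S_C HS).
exact: setICr.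
Qed.

Lemma A_lin (nu : set X -> R) E : ba_measure Sigma nu -> nonneg_measure Sigma nu -> Sigma E ->
  markov_op Sigma p (fun F => mu F + nu F) E = markov_op Sigma p mu E + markov_op Sigma p nu E.
Proof. by move=> Bn Nn HE; apply: (Ilin_mu HS) => //; [exact: pf_meas|exact: pf_01]. Qed.

Lemma A_meq (nu : set X -> R) E : meq Sigma mu nu -> markov_op Sigma p mu E = markov_op Sigma p nu E.
Proof. by move=> H; apply: I_meq. Qed.

Lemma A_ca : countably_additive Sigma mu -> countably_additive Sigma (markov_op Sigma p mu).
Proof.
move=> Cm; apply: (CA_crit HS A_ba A_nn) => E HE Ht e He.
pose T N := \bigcup_n E n `\` \big[setU/set0]_(0 <= i < N) E i.
have HT : forall N, Sigma (T N) by move=> N; apply: S_tail.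
have HX : 0 <= mu setT by apply: Nm; exact: (S_T HS).
pose e' := e / 2 / (mu setT + 1).
have He' : 0 < e' by apply: divr_gt0; [apply: divr_gt0|lra].
have He'X : e' * mu setT <= e / 2.
  have Hpos : 0 < mu setT + 1 by lra.
  have -> : e / 2 = e' * (mu setT + 1) by rewrite /e' divfK // lt0r_neq0.
  by apply: ler_wpM2l; [exact: ltW|lra].
pose Sn N := [set x | e' < p x (T N)].
have HSn : forall N, Sigma (Sn N) by move=> N; apply: (S_gt HS); apply: pf_meas.
have Hdec : forall N, Sn N.+1 `<=` Sn N.
  move=> N x /= H; apply: lt_le_trans H _; apply: (mmono HS (p_ba x) (p_nn x)) => //.
  move=> y [Ey nU]; split => // HU; apply: nU; rewrite big_nat_recr //=; by left.
have Hex : forall x, exists N, ~ Sn N x.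
  move=> x; have [N HN] := cvg_ev (p_ca (x:=x) HE Ht) He'; exists N => /=.
  have := HN N (leqnn N); rewrite (tailId HS N (p_ba x) HE Ht).
  rewrite addrC addKr ger0_norm; last exact: (p_nn x (HT N)).
  by move=> H1 H2; have := lt_le_trans H2 H1; rewrite ltxx.
have He2 : 0 < e / 2 by apply: divr_gt0.
have [N HN] := ca_cont_down HS Bm Nm Cm HSn Hdec Hex He2.
exists N; rewrite (tailId HS N A_ba HE Ht) lerD2l.
have Hp01 : forall x, 0 <= p x (T N) <= 1 by apply: pf_01.
have := I_tail HS Bm Nm (pf_meas (HT N)) Hp01 (ltW He').
rewrite -/(markov_op Sigma p mu (T N)) => H.
apply: le_trans H _; rewrite -/(Sn N); lra.
Qed.
End Markov.

Lemma cyc_sum (R : realType) (g : nat -> R) m : (0 < m)%N ->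
  \sum_(i < m) g (i.+1 %% m)%N = \sum_(i < m) g i.
Proof.
case: m => // m _; rewrite big_ord_recr big_ord_recl /= modnn addrC; congr (_ + _).
apply: eq_bigr => i _; rewrite modn_small //= ltnS //.
Qed.

Lemma eq_of_mass (R : realType) (X : Type) (Sigma : set (set X)) (l1 l2 : set X -> R) :
  is_sigma_algebra Sigma -> ba_measure Sigma l1 -> ba_measure Sigma l2 ->
  (forall E, Sigma E -> l1 E <= l2 E) -> l1 setT = l2 setT -> meq Sigma l1 l2.
Proof.
move=> HS B1 B2 Hle HT E HE.
have HCE := S_C HS HE.
have H1 := Hle _ HE; have H2 := Hle _ HCE.
have E1 : l1 setT = l1 E + l1 (~` E) by rewrite -(setUCr E) (mU B1) // setICr.
have E2 : l2 setT = l2 E + l2 (~` E) by rewrite -(setUCr E) (mU B2) // setICr.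
lra.
Qed.

Unset Implicit Arguments.
Theorem theorem4p4 (R : realType) (X : Type) (Sigma : set (set X))
  (p : X -> set X -> R) (m : nat) (mu muca mupfa : nat -> set X -> R) :
  infinite_set [set: X] ->
  is_sigma_algebra Sigma ->
  (forall x : X, Sigma [set x]) ->
  transition_function Sigma p ->
  is_cycle Sigma p m mu ->
  (forall i j, (i < m)%N -> (j < m)%N -> i <> j ->
     meas_disjoint Sigma (mu i) (mu j)) ->
  (forall i, (i < m)%N ->
     [/\ ba_measure Sigma (muca i), nonneg_measure Sigma (muca i),
         countably_additive Sigma (muca i), purely_fa Sigma (mupfa i) &
         meq Sigma (mu i) (fun E => muca i E + mupfa i E)]) ->
  [/\ (forall i, (i < m)%N ->
         meq Sigma (markov_op Sigma p (muca i)) (muca (i.+1 %% m)%N)),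
      (forall i, (i < m)%N ->
         meq Sigma (markov_op Sigma p (mupfa i)) (mupfa (i.+1 %% m)%N)),
      (forall i, (i < m)%N -> meq Sigma (mu i) (fun E => muca i E + mupfa i E)),
      [/\ ba_measure Sigma (mean_measure m muca),
          countably_additive Sigma (mean_measure m muca),
          purely_fa Sigma (mean_measure m mupfa),
          meq Sigma (mean_measure m mu)
            (fun E => mean_measure m muca E + mean_measure m mupfa E) &
          (forall c q : set X -> R,
             ba_measure Sigma c -> countably_additive Sigma c ->
             purely_fa Sigma q ->
             meq Sigma (mean_measure m mu) (fun E => c E + q E) ->
             meq Sigma c (mean_measure m muca) /\
             meq Sigma q (mean_measure m mupfa))] &
      [/\ (forall i j, (i < m)%N -> (j < m)%N -> i <> j ->
             meas_disjoint Sigma (muca i) (muca j)),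
          (forall i j, (i < m)%N -> (j < m)%N -> i <> j ->
             meas_disjoint Sigma (mupfa i) (mupfa j)) &
          (forall i j, (i < m)%N -> (j < m)%N ->
             meas_disjoint Sigma (muca i) (mupfa j))]].
Proof.
move=> Hinf HS _ Hp [Hm0 Hmu _ Hcyc] Hdisj Hdec.
have [x0 _] : [set: X] !=set0.
  case: (pselect ([set: X] !=set0)) => // H; exfalso; apply: Hinf.
  have -> : [set: X] = set0 by apply/seteqP; split => // x _; apply: H; exists x.
  exact: finite_set0.
have Bc i : (i < m)%N -> ba_measure Sigma (muca i) by move=> Hi; case: (Hdec i Hi).
have Nc i : (i < m)%N -> nonneg_measure Sigma (muca i) by move=> Hi; case: (Hdec i Hi).
have Cc i : (i < m)%N -> countably_additive Sigma (muca i) by move=> Hi; case: (Hdec i Hi).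
have Pp i : (i < m)%N -> purely_fa Sigma (mupfa i) by move=> Hi; case: (Hdec i Hi).
have Bp i : (i < m)%N -> ba_measure Sigma (mupfa i) by move=> Hi; case: (Pp i Hi).
have Np i : (i < m)%N -> nonneg_measure Sigma (mupfa i) by move=> Hi; case: (Pp i Hi).
have Eq i : (i < m)%N -> meq Sigma (mu i) (fun E => muca i E + mupfa i E)
  by move=> Hi; case: (Hdec i Hi).
have Hj i : (i < m)%N -> (i.+1 %% m < m)%N by move=> _; rewrite ltn_pmod.
have Asplit i E : (i < m)%N -> Sigma E ->
    markov_op Sigma p (mu i) E = markov_op Sigma p (muca i) E + markov_op Sigma p (mupfa i) E.
  move=> Hi HE; rewrite (A_meq p E (Eq i Hi)).
  by apply: (A_lin HS Hp) => //; [exact: Bc|exact: Nc|exact: Bp|exact: Np].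
have Acyc i E : (i < m)%N -> Sigma E -> markov_op Sigma p (mu i) E = mu (i.+1 %% m)%N E.
  by move=> Hi HE; apply: Hcyc.
have Ale i E : (i < m)%N -> Sigma E -> markov_op Sigma p (muca i) E <= muca (i.+1 %% m)%N E.
  move=> Hi HE.
  have Hji := Hj i Hi.
  have BA := A_ba HS Hp x0 (Bc i Hi) (Nc i Hi).
  have CA := A_ca HS Hp x0 (Bc i Hi) (Nc i Hi) (Cc i Hi).
  have Hd := pos_part HS (ba_add BA (ba_scale (-1) (Bc _ Hji)))
    (ca_add CA (ca_scale (a := -1) (Cc _ Hji))) (Pp _ Hji).
  suff : markov_op Sigma p (muca i) E + (-1) * muca (i.+1 %% m)%N E <= 0 by lra.
  apply: Hd => // F HF.
  have := Asplit i F Hi HF; rewrite Acyc // (Eq _ Hji) // => H.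
  have := A_nn HS Hp x0 (Bp i Hi) (Np i Hi) HF; lra.
have Aca i : (i < m)%N -> meq Sigma (markov_op Sigma p (muca i)) (muca (i.+1 %% m)%N).
  have HST := S_T HS.
  pose F (k : 'I_m) := muca (k.+1 %% m)%N setT - markov_op Sigma p (muca k) setT.
  have HF0 : forall k : 'I_m, true -> 0 <= F k.
    by move=> k _; rewrite /F subr_ge0; apply: Ale.
  have HFs : \sum_(k < m) F k = 0.
    rewrite /F sumrB (cyc_sum (fun k => muca k setT) Hm0).
    have -> : \sum_(k < m) markov_op Sigma p (muca k) setT = \sum_(k < m) muca k setT.
      by apply: eq_bigr => k _; apply: (A_mass HS Hp x0); [exact: Bc|exact: Nc].
    by rewrite subrr.
  move=> Hi; have := psumr_eq0P HF0 HFs (i:=Ordinal Hi) isT; rewrite /F /= => H0.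
  apply: (eq_of_mass HS (A_ba HS Hp x0 (Bc i Hi) (Nc i Hi)) (Bc _ (Hj i Hi))).
    by move=> E HE; apply: Ale.
  by apply/eqP; rewrite eq_sym -subr_eq0 H0.
have Apfa i : (i < m)%N -> meq Sigma (markov_op Sigma p (mupfa i)) (mupfa (i.+1 %% m)%N).
  move=> Hi E HE; have := Asplit i E Hi HE; rewrite Acyc // (Eq _ (Hj i Hi)) // (Aca i Hi E HE).
  lra.
have Hm' : (0 : R) < m%:R^-1 by rewrite invr_gt0 ltr0n.
have BM : ba_measure Sigma (mean_measure m muca).
  apply: (ba_scale m%:R^-1); apply: sum_closed; [exact: ba_zero|move=> f g; exact: ba_add|exact: Bc].
have CM : countably_additive Sigma (mean_measure m muca).
  apply: (ca_scale (a := m%:R^-1)); apply: sum_closed; [exact: ca_zero|move=> f g; exact: ca_add|exact: Cc].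
have PQ : purely_fa Sigma (mean_measure m mupfa).
  apply: (pfa_scale Hm'); apply: sum_closed; [exact: pfa_zero|move=> f g; exact: pfa_add|exact: Pp].
have EQ : meq Sigma (mean_measure m mu) (fun E => mean_measure m muca E + mean_measure m mupfa E).
  move=> E HE; rewrite /mean_measure -mulrDr -big_split; congr (_ * _).
  by apply: eq_bigr => k _; apply: (Eq k (ltn_ord k)).
split => //.
- split => // c q Bc' Cc' Pq' Heq.
  have [Bq Nq _] := Pq'; have [BQ NQ _] := PQ.
  have H1 := pos_part HS (ba_add Bc' (ba_scale (-1) BM)) (ca_add Cc' (ca_scale (a := -1) CM)) PQ.
  have H2 := pos_part HS (ba_add BM (ba_scale (-1) Bc')) (ca_add CM (ca_scale (a := -1) Cc')) Pq'.
  have Hc : meq Sigma c (mean_measure m muca).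
    move=> E HE; apply/eqP; rewrite eq_le; apply/andP; split.
      suff : c E + (-1) * mean_measure m muca E <= 0 by lra.
      apply: H1 => // F HF; have := Heq F HF; have := EQ F HF; have := Nq F HF; lra.
    suff : mean_measure m muca E + (-1) * c E <= 0 by lra.
    apply: H2 => // F HF; have := Heq F HF; have := EQ F HF; have := NQ F HF; lra.
  split => // E HE; have := Heq E HE; have := EQ E HE; have := Hc E HE; lra.
split.
- move=> i j Hi Hj' Hij E HE; apply/eqP; rewrite eq_le; apply/andP; split.
    rewrite -(Hdisj i j Hi Hj' Hij E HE).
    apply: (meet_mono HS (Bc i Hi) (Nc i Hi) (Bc j Hj') (Nc j Hj') _ _ HE).
      by move=> F HF; rewrite (Eq i Hi F HF) lerDl; apply: Np.
    by move=> F HF; rewrite (Eq j Hj' F HF) lerDl; apply: Np.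
  exact: (meet_ge0 HS (Nc i Hi) (Nc j Hj') HE).
- move=> i j Hi Hj' Hij E HE; apply/eqP; rewrite eq_le; apply/andP; split.
    rewrite -(Hdisj i j Hi Hj' Hij E HE).
    apply: (meet_mono HS (Bp i Hi) (Np i Hi) (Bp j Hj') (Np j Hj') _ _ HE).
      by move=> F HF; rewrite (Eq i Hi F HF) lerDr; apply: Nc.
    by move=> F HF; rewrite (Eq j Hj' F HF) lerDr; apply: Nc.
  exact: (meet_ge0 HS (Np i Hi) (Np j Hj') HE).
- move=> i j Hi Hj'; apply: (ca_pfa_disj HS); [exact: Bc|exact: Nc|exact: Cc|exact: Pp].
Qed.
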